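(* Let $\Phi=(V,\mathcal C)$ be a $(k,d,s)$-CNF formula satisfying $k\ge\log d+\log k+\log(2\mathrm e)+s$, and let $c^*\notin\mathcal C$ be a clause on $k$ distinct variables with forbidden assignment $\sigma^*$. If there exists a clause $c'\in\mathcal C$ with $\mathrm{vbl}(c')=\mathrm{vbl}(c^* )$ but $c'\ne c^*$, then $$\Pr_{X\sim\mu_\Phi}[X_{\mathrm{vbl}(c^* )}=\sigma^*]\ge\Big(1-\frac12\exp\Big(\frac1k\Big)\Big)^k.$$
   Context: $\log$ denotes $\log_2$. A $(k,d,s)$-CNF formula is a CNF formula in which every clause contains exactly $k$ distinct variables, every variable appears in at most $d$ clauses, and any two distinct clauses share at most $s$ variables. $\mathrm{vbl}(c)$ is the variable set of clause $c$; the forbidden assignment of a clause is the unique assignment of its variables violating it. $\mu_\Phi$ is the uniform distribution over satisfying assignments of $\Phi$. *)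

(* Defs.v *)
From mathcomp Require Import all_boot.
From Stdlib Require Import Reals.
Set Implicit Arguments. Unset Strict Implicit. Unset Printing Implicit Defensive.

(* A clause over the finite variable set V: for each variable v,
   [c v = None] means v does not occur in c, and [c v = Some b] means v occurs
   in c and the forbidden assignment of c sets v to b
   (i.e. the literal of v in c is falsified exactly by the value b). *)
Definition clause (V : finType) := {ffun V -> option bool}.
Definition assignment (V : finType) := {ffun V -> bool}.

Definition vbl (V : finType) (c : clause V) : {set V} := [set v | c v != None].

Definition agrees_forbidden (V : finType) (c : clause V) (x : assignment V) : bool :=
  [forall v, if c v is Some b then x v == b else true].

Definition sat_clause (V : finType) (c : clause V) (x : assignment V) : bool :=
  ~~ agrees_forbidden c x.

Definition sat_formula (V : finType) (Phi : {set clause V}) (x : assignment V) : bool :=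
  [forall c in Phi, sat_clause c x].

Definition kds_CNF (V : finType) (k d s : nat) (Phi : {set clause V}) : Prop :=
  (forall c, c \in Phi -> #|vbl c| = k) /\
  (forall v : V, #|[set c in Phi | v \in vbl c]| <= d) /\
  (forall c c', c \in Phi -> c' \in Phi -> c != c' -> #|vbl c :&: vbl c'| <= s).

Definition log2 (x : R) : R := (ln x / ln 2)%R.

Definition muPr (V : finType) (Phi : {set clause V}) (E : pred (assignment V)) : R :=
  (INR #|[set x : assignment V | sat_formula Phi x && E x]|
   / INR #|[set x : assignment V | sat_formula Phi x]|)%R.

(* Main.v *)
Require Import Defs.
From mathcomp Require Import all_boot.
From Stdlib Require Import Reals.
From Stdlib Require Import Lra.
Import ssrnat.
Set Implicit Arguments. Unset Strict Implicit. Unset Printing Implicit Defensive.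

Section Count.
Variable V : finType.

Definition agreeOut (W : {set V}) (x y : assignment V) := forall v, v \notin W -> x v = y v.
Definition invS (W : {set V}) (H : {set assignment V}) :=
  forall x y, agreeOut W x y -> (x \in H) = (y \in H).

Lemma count_overwrite (W : {set V}) (tau : assignment V) (H : {set assignment V}) :
  invS W H ->
  #|[set x in H | [forall w in W, x w == tau w]]| * 2 ^ #|W| <= #|H|.
Proof.
move=> iH.
set E := [set x in H | _].
set Y := [set y : assignment V in pffun_on false W predT].
have cY : #|Y| = 2 ^ #|W|.
  rewrite cardsE card_pffun_on.
  have ->: #|@predT bool| = 2 by rewrite -card_bool; apply: eq_card.
  done.
pose f (xy : assignment V * assignment V) : assignment V :=
  [ffun v => if v \in W then xy.2 v else xy.1 v].
rewrite -cY -cardsX -(card_in_imset (f := f)).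
  apply: subset_leq_card; apply/subsetP => z /imsetP [[x y]].
  rewrite inE /= => /andP [xE _] ->.
  move: xE; rewrite inE => /andP [xH _].
  rewrite -(iH x); first exact: xH.
  by move=> v vW; rewrite /f ffunE /= (negbTE vW).
move=> [x y] [x' y']; rewrite !inE /= => /andP [xE yY] /andP [x'E y'Y] eq.
have e v : f (x, y) v = f (x', y') v by rewrite eq.
move: xE x'E => /andP [_ /forall_inP xt] /andP [_ /forall_inP x't].
move/forallP: yY => sy; move/forallP: y'Y => sy'.
congr pair; apply/ffunP => v; have := e v; rewrite /f !ffunE /=;
  have := sy v; have := sy' v; case vW: (v \in W) => //.
- by rewrite (eqP (xt v vW)) (eqP (x't v vW)).
- by rewrite !inE => /eqP -> /eqP ->.
Qed.

Lemma agrees_local (W : {set V}) (c : clause V) x y :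
  [disjoint vbl c & W] -> agreeOut W x y -> agrees_forbidden c x = agrees_forbidden c y.
Proof.
move=> dis ag; apply/forallP/forallP => h v; have := h v;
  case cv: (c v) => [b|] //.
- have vW: v \notin W.
    by rewrite (disjointFr dis) // inE cv.
  by rewrite (ag v vW).
- have vW: v \notin W.
    by rewrite (disjointFr dis) // inE cv.
  by rewrite (ag v vW).
Qed.

End Count.


Lemma INR_addn m n : INR (m + n) = (INR m + INR n)%R. Proof. by rewrite -plus_INR. Qed.
Lemma INR_muln m n : INR (m * n) = (INR m * INR n)%R. Proof. by rewrite -mult_INR. Qed.
Lemma INR_leq m n : m <= n -> (INR m <= INR n)%R. Proof. by move/leP; apply: le_INR. Qed.

Lemma pow_decr (y : R) m n : (0 <= y <= 1)%R -> m <= n -> (y ^ n <= y ^ m)%R.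
Proof.
move=> hy; elim: n => [|n IH]; first by rewrite leqn0 => /eqP ->; lra.
rewrite leq_eqVlt => /orP [/eqP -> | ]; first lra.
rewrite ltnS => /IH h /=.
have: (0 <= y ^ n)%R by apply: pow_le; lra.
nra.
Qed.

Lemma disjP (T:finType) (A B : {pred T}) : reflect (forall z, z \in A -> z \in B -> False) [disjoint A & B].
Proof.
apply: (iffP pred0P) => h.
  move=> z zA zB; have := h z; by rewrite /= zA zB.
move=> z /=; apply/negP => /andP [zA zB]; exact: h zA zB.
Qed.

Section LLL.
Variables (V : finType) (F : {set assignment V}) (C : {set clause V}) (p x : R) (Delta : nat).

Definition NN (T : {set clause V}) := [set z in F | sat_formula T z].
Definition AC (c : clause V) T := [set z in NN T | agrees_forbidden c z].

Hypothesis H1 : forall c (G : {set assignment V}), c \in C -> invS (vbl c) G ->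
  (INR #|[set z in G :&: F | agrees_forbidden c z]| <= p * INR #|G :&: F|)%R.
Hypothesis H2 : forall c, c \in C -> #|[set c' in C | ~~ [disjoint vbl c & vbl c']]| <= Delta.
Hypothesis Hx : (0 <= x < 1)%R.
Hypothesis Hp : (p <= x * (1 - x) ^ Delta)%R.

Lemma satU1 (c : clause V) (T : {set clause V}) (z : assignment V) : sat_formula (c |: T) z = sat_clause c z && sat_formula T z.
Proof.
apply/forall_inP/andP => [h | [h1 /forall_inP h2] c'].
  split; first by apply: h; rewrite setU11.
  by apply/forall_inP => c' c'T; apply: h; rewrite setU1r.
by case/setU1P => [-> | /h2].
Qed.

Lemma card_split (c : clause V) (T : {set clause V}) : #|NN T| = #|NN (c |: T)| + #|AC c T|.
Proof.
rewrite -(cardsID [set z | agrees_forbidden c z] (NN T)) addnC; congr (_ + _).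
  apply: eq_card => z; rewrite !inE satU1 /sat_clause.
  by case: (z \in F); case: (agrees_forbidden c z); case: (sat_formula T z).
apply: eq_card => z; rewrite !inE.
by case: (z \in F); case: (agrees_forbidden c z); case: (sat_formula T z).
Qed.

Lemma NN_sub (T T' : {set clause V}) : T \subset T' -> NN T' \subset NN T.
Proof.
move=> sT; apply/subsetP => z; rewrite !inE => /andP [-> /forall_inP h] /=.
by apply/forall_inP => c cT; apply: h; apply: (subsetP sT).
Qed.

Lemma peel m :
  (forall (T : {set clause V}) c, #|T| < m -> T \subset C -> c \in C -> c \notin T ->
     (INR #|AC c T| <= x * INR #|NN T|)%R) ->
  forall n (R T : {set clause V}), #|R| = n -> R \subset C -> T \subset C -> #|T :|: R| <= m ->
    [disjoint T & R] ->
    ((1 - x) ^ n * INR #|NN T| <= INR #|NN (T :|: R)|)%R.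
Proof.
move=> hm; elim => [|n IH] R T cR RC TC cTR dTR.
  move/eqP: cR; rewrite cards_eq0 => /eqP ->; rewrite setU0 /=; lra.
have: (0 < #|R|) by rewrite cR.
rewrite card_gt0 => /set0Pn [c cR'].
have cT : c \notin T by rewrite (disjointFl dTR).
have e1 : (c |: T) :|: (R :\ c) = T :|: R.
  apply/setP => z; rewrite !inE.
  by case: (z =P c) => [-> | _]; rewrite ?cR' ?orbT //= orbF.
have := IH (R :\ c) (c |: T).
rewrite e1 => /(_ _ _ _ cTR) h.
have {h} h : ((1 - x) ^ n * INR #|NN (c |: T)| <= INR #|NN (T :|: R)|)%R.
  apply: h.
  - by move: cR; rewrite (cardsD1 c R) cR' add1n => -[].
  - by apply: subset_trans RC; apply: subsetDl.
  - by rewrite subUset sub1set (subsetP RC) // TC.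
  - apply/disjP => z; rewrite !inE => /orP [/eqP -> | zT] /andP [zc zR].
      by rewrite eqxx in zc.
    by move/disjP: dTR => /(_ z zT zR).
have hc : (INR #|AC c T| <= x * INR #|NN T|)%R.
  apply: hm => //; last by apply: (subsetP RC).
  apply: leq_trans cTR.
  apply: (@leq_trans #|c |: T|); first by rewrite cardsU1 cT.
  apply: subset_leq_card; by rewrite subUset sub1set !inE cR' orbT subsetUl.
have := card_split c T; move/(congr1 INR); rewrite INR_addn => e.
have p0 : (0 <= (1 - x) ^ n)%R by apply: pow_le; lra.
rewrite /=.
have : ((1 - x) * INR #|NN T| <= INR #|NN (c |: T)|)%R.
  move: e hc; set a := INR #|NN T|; set b := INR _; set d := INR _. move=> e hc. nra.
move=> h2.
have := Rmult_le_compat_l _ _ _ p0 h2.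
move: h; set a := INR _; set b := INR _; set d := INR _ => h. nra.
Qed.

Lemma sat_local (W : {set V}) (T : {set clause V}) z z' :
  (forall c, c \in T -> [disjoint vbl c & W]) -> agreeOut W z z' ->
  sat_formula T z = sat_formula T z'.
Proof.
move=> hT ag; apply/forall_inP/forall_inP => h c cT; have := h c cT;
  by rewrite /sat_clause (agrees_local (hT c cT) ag).
Qed.

Lemma split_T (T : {set clause V}) (P : pred (clause V)) :
  let T1 := [set c in T | P c] in let T2 := T :\: T1 in
  T = T2 :|: T1 /\ [disjoint T2 & T1] /\ T2 \subset T /\ T1 \subset T.
Proof.
move=> T1 T2; split; [|split; [|split]].
- apply/setP => c; rewrite !inE; by case: (c \in T); case: (P c).
- apply/disjP => c; rewrite !inE => /andP [/negP h _] /andP [h1 h2].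
  by apply: h; rewrite h1 h2.
- exact: subsetDl.
- by apply/subsetP => c; rewrite inE => /andP [].
Qed.

Lemma mainLLL n : forall (T : {set clause V}) c, #|T| < n -> T \subset C -> c \in C ->
  c \notin T -> (INR #|AC c T| <= x * INR #|NN T|)%R.
Proof.
elim: n => [|n IH] T c //; rewrite ltnS => cT TC cC cnT.
have [eT [dT [sT2 sT1]]] := split_T T (fun c' => ~~ [disjoint vbl c & vbl c']).
set T1 := [set c' in T | _] in eT dT sT2 sT1.
set T2 := T :\: T1 in eT dT sT2 sT1.
have cTn : #|T2 :|: T1| <= n by rewrite -eT.
have hpeel := peel IH (erefl #|T1|) (subset_trans sT1 TC) (subset_trans sT2 TC) cTn dT.
rewrite -eT in hpeel.
have d1 : #|T1| <= Delta.
  apply: leq_trans (H2 cC); apply: subset_leq_card; apply/subsetP => c'.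
  by rewrite !inE => /andP [h ->]; rewrite (subsetP TC).
have a1 : #|AC c T| <= #|AC c T2|.
  apply: subset_leq_card; apply/subsetP => z; rewrite !inE => /andP [/andP [zF zT] ->].
  rewrite zF andbT /=; apply/forall_inP => c' c'T2.
  by move/forall_inP: zT; apply; apply: (subsetP sT2).
pose G := [set z | sat_formula T2 z].
have iG : invS (vbl c) G.
  move=> z z' ag; rewrite !inE; apply: (sat_local _ ag) => c' c'T2.
  move: c'T2; rewrite !inE => /andP [h c'T]; move: h; rewrite c'T /= negbK.
  by rewrite disjoint_sym.
have a2 := H1 cC iG.
have eG : G :&: F = NN T2 by apply/setP => z; rewrite !inE andbC.
rewrite eG in a2.
have eA : [set z in NN T2 | agrees_forbidden c z] = AC c T2 by [].
rewrite eA in a2.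
have pw : ((1 - x) ^ Delta <= (1 - x) ^ #|T1|)%R by apply: pow_decr => //; lra.
have pw0 : (0 <= (1 - x) ^ Delta)%R by apply: pow_le; lra.
have n0 : (0 <= INR #|NN T2|)%R by apply: pos_INR.
have := INR_leq a1.
move: hpeel a2; set a := INR #|NN T2|; set b := INR #|NN T|; set u := ((1 - x) ^ #|T1|)%R.
set w := ((1 - x) ^ Delta)%R; set ac := INR #|AC c T|; set ac2 := INR #|AC c T2|.
move=> hp a2 a1'.
have : (p * a <= x * w * a)%R by apply: Rmult_le_compat_r.
have : (x * w * a <= x * u * a)%R.
  apply: Rmult_le_compat_r => //; apply: Rmult_le_compat_l => //; lra.
have : (x * (u * a) <= x * b)%R by apply: Rmult_le_compat_l; lra.
nra.
Qed.

Lemma event_bound (w : V) (b : bool) dd :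
  invS [set w] F -> #|[set c in C | w \in vbl c]| <= dd ->
  ((1 - x) ^ dd * INR #|[set z in NN C | z w == b]| <= / 2 * INR #|NN C|)%R.
Proof.
move=> iF cd.
have [eT [dT [sT2 sT1]]] := split_T C (fun c' => w \in vbl c').
set T1 := [set c' in C | _] in eT dT sT2 sT1 cd.
set T2 := C :\: T1 in eT dT sT2 sT1.
have cTn : #|T2 :|: T1| <= #|C| by rewrite -eT.
have hpeel := peel (@mainLLL #|C|) (erefl #|T1|) sT1 sT2 cTn dT.
rewrite -eT in hpeel.
have a1 : #|[set z in NN C | z w == b]| <= #|[set z in NN T2 | [forall w0 in [set w], z w0 == [ffun => b] w0]]|.
  apply: subset_leq_card; apply/subsetP => z; rewrite !inE => /andP [/andP [zF zT] zb].
  rewrite zF /=; apply/andP; split.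
    apply/forall_inP => c' c'T2.
    by move/forall_inP: zT; apply; apply: (subsetP sT2).
  by apply/forall_inP => w0; rewrite inE => /eqP ->; rewrite ffunE.
have iN : invS [set w] (NN T2).
  move=> z z' ag; rewrite !inE (iF z z' ag); congr andb.
  apply: (sat_local _ ag) => c'; rewrite !inE => /andP [h c'C].
  move: h; rewrite c'C /= => h.
  apply/disjP => v vc; rewrite inE => /eqP ev; subst v. by move: vc; rewrite inE (negPf h).
have a2 := count_overwrite [ffun => b] iN.
rewrite cards1 in a2.
have pw : ((1 - x) ^ dd <= (1 - x) ^ #|T1|)%R by apply: pow_decr => //; lra.
have pw0 : (0 <= (1 - x) ^ dd)%R by apply: pow_le; lra.
move/INR_leq: a1 => a1. move/INR_leq: a2; rewrite INR_muln /= => a2.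
move: hpeel a1 a2; set E := INR #|[set z in NN C | _]|; set E2 := INR #|[set z in NN T2 | [forall w0 in [set w], z w0 == [ffun=> b] w0]]|; set a := INR #|NN T2|.
set u := ((1 - x) ^ #|T1|)%R; set v := ((1 - x) ^ dd)%R; set nc := INR _ => hp a1 a2.
have E0 : (0 <= E)%R by apply: pos_INR.
have u0 : (0 <= u)%R by apply: pow_le; lra.
have : (v * E <= u * E)%R by apply: Rmult_le_compat_r.
have : (u * E <= u * E2)%R by apply: Rmult_le_compat_l; lra.
have : (u * (E2 * (1+1)) <= u * a)%R by apply: Rmult_le_compat_l; lra.
nra.
Qed.
End LLL.

Module NumM.
Local Open Scope R_scope.

Lemma exp_le_mono a b : a <= b -> exp a <= exp b.
Proof. move=> h; case: (Rle_lt_or_eq_dec _ _ h) => [/exp_increasing|->]; lra. Qed.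

Lemma ln_ge0 y : 1 <= y -> 0 <= ln y.
Proof.
move=> h; case: (Rle_lt_or_eq_dec _ _ h) => [l|<-]; last by rewrite ln_1; lra.
rewrite -ln_1; left; apply: ln_increasing; lra.
Qed.

Lemma pow_exp y n : 0 <= y -> (1 + y) ^ n <= exp (INR n * y).
Proof.
move=> y0; elim: n => [|n IH]; first by rewrite /= Rmult_0_l exp_0; lra.
change ((1+y)^n.+1) with ((1+y) * (1+y)^n).
rewrite S_INR.
have -> : (INR n + 1) * y = y + INR n * y by ring.
rewrite exp_plus.
have := exp_ineq1_le y => h1.
have h0 : 0 <= (1 + y) ^ n by apply: pow_le; lra.
apply: Rmult_le_compat => //; lra.
Qed.

Lemma ln2_pos : 0 < ln 2.
Proof. rewrite -ln_1; apply: ln_increasing; lra. Qed.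

Lemma e_gt1 : 1 < exp 1.
Proof. have := exp_ineq1_le 1; lra. Qed.

Section Num.
Variables k d s : nat.
Hypothesis k1 : (1 <= k)%N.
Hypothesis d1 : (1 <= d)%N.
Hypothesis hyp : INR k >= log2 (INR d) + log2 (INR k) + log2 (2 * exp 1) + INR s.

Let K := INR k.
Let D := INR d.
Lemma K1 : 1 <= K. Proof. rewrite /K -/(INR 1); apply: le_INR; exact/leP. Qed.
Lemma D1 : 1 <= D. Proof. rewrite /D -/(INR 1); apply: le_INR; exact/leP. Qed.

Lemma ln2e : ln 2 < ln (2 * exp 1).
Proof. apply: ln_increasing; have := e_gt1; lra. Qed.

Lemma hyp' : ln (2 * exp 1) + ln K + ln D <= (K - INR s) * ln 2.
Proof.
move: hyp; rewrite /log2 -/K -/D => h.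
have l2 := ln2_pos.
have : (ln D / ln 2 + ln K / ln 2 + ln (2 * exp 1) / ln 2) * ln 2 <= (K - INR s) * ln 2.
  apply: Rmult_le_compat_r; lra.
have -> : (ln D / ln 2 + ln K / ln 2 + ln (2 * exp 1) / ln 2) * ln 2 =
   ln D + ln K + ln (2 * exp 1) by field; lra.
lra.
Qed.

Lemma s_lt_k : (s < k)%N.
Proof.
have := hyp'; have := ln2e; have := ln_ge0 K1; have := ln_ge0 D1; have := ln2_pos.
have := ln_ge0 (Rle_refl 1); rewrite ln_1.
move=> _ l2 lD lK l2e h.
have : 0 < (K - INR s) * ln 2 by lra.
move=> h2.
have : 0 < K - INR s.
  case: (Rlt_or_le 0 (K - INR s)) => // hn; exfalso.
  have : (K - INR s) * ln 2 <= 0 by nra.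
  lra.
move=> h3; apply/ltP; apply: INR_lt; rewrite -/K; lra.
Qed.

Lemma k2 : (2 <= k)%N.
Proof.
have := hyp'; have := ln2e; have := ln_ge0 K1; have := ln_ge0 D1; have := ln2_pos.
move=> l2 lD lK l2e h.
have h1 : ln 2 < (K - INR s) * ln 2 by lra.
have h2 : 1 < K - INR s.
  case: (Rlt_or_le 1 (K - INR s)) => // hn; exfalso.
  have : (K - INR s) * ln 2 <= 1 * ln 2 by apply: Rmult_le_compat_r; lra.
  lra.
have := pos_INR s => hs.
apply/ltP; apply: INR_lt; rewrite -/K /=; lra.
Qed.

Let M := K * D.
Let x := / (M + 1).
Let p := / 2 ^ (k - s).

Lemma M1 : 1 <= M.
Proof. have := K1; have := D1; rewrite /M; nra. Qed.

Lemma x01 : 0 <= x < 1.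
Proof.
have := M1 => m1; rewrite /x; split.
  left; apply: Rinv_0_lt_compat; lra.
rewrite -Rinv_1; apply: Rinv_lt_contravar; lra.
Qed.

Lemma pow_1x n : (1 - x) ^ n * (1 + / M) ^ n = 1.
Proof.
have := M1 => m1.
rewrite -Rpow_mult_distr.
have -> : (1 - x) * (1 + / M) = 1 by rewrite /x; field; lra.
by rewrite pow1.
Qed.

Lemma pow_1x_ge n : / exp (INR n / M) <= (1 - x) ^ n.
Proof.
have := M1 => m1.
have e := pow_1x n.
have h0 : 0 < (1 + / M) ^ n.
  apply: pow_lt; have : 0 < / M by apply: Rinv_0_lt_compat; lra. lra.
have := pow_exp n (Rlt_le _ _ (Rinv_0_lt_compat M ltac:(lra))).
rewrite -/(Rdiv (INR n) M) => h.
have -> : (1 - x) ^ n = / (1 + / M) ^ n.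
  apply: (Rmult_eq_reg_r ((1 + / M) ^ n)); last lra.
  rewrite e Rinv_l; lra.
apply: Rinv_le_contravar => //.
Qed.

Lemma two_pow : 2 * exp 1 * M <= 2 ^ (k - s).
Proof.
have := hyp'; rewrite -/K -/D => h.
have l2 := ln2_pos.
have := M1 => m1.
have e1 : 0 < exp 1 by apply: exp_pos.
have hk := s_lt_k.
have ep : ln (2 ^ (k - s)) = (K - INR s) * ln 2.
  rewrite ln_pow; last lra.
  rewrite minus_INR //; apply/leP; exact: ltnW.
have el : ln (2 * exp 1 * M) = ln (2 * exp 1) + ln K + ln D.
  have K0 : 0 < K by have := K1; lra.
  have D0 : 0 < D by have := D1; lra.
  rewrite /M -Rmult_assoc ln_mult; [|nra|lra].
  by rewrite ln_mult; [|nra|lra].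
case: (Rlt_or_le (2 ^ (k - s)) (2 * exp 1 * M)) => // hl.
have := ln_increasing _ _ (pow_lt 2 (k - s) ltac:(lra)) hl.
rewrite ep el; lra.
Qed.

Lemma N1 : p <= x * (1 - x) ^ (k * d).
Proof.
have := M1 => m1.
have hM : INR (k * d) = M by rewrite mult_INR.
have := pow_1x_ge (k * d); rewrite hM.
have -> : M / M = 1 by field; lra.
move=> h.
have e1 : 1 < exp 1 := e_gt1.
have x0 : 0 < x by rewrite /x; apply: Rinv_0_lt_compat; lra.
have h2 : x * / exp 1 <= x * (1 - x) ^ (k * d) by apply: Rmult_le_compat_l; lra.
apply: Rle_trans h2.
rewrite /p /x -Rinv_mult.
apply: Rinv_le_contravar; first by apply: Rmult_lt_0_compat; lra.
have := two_pow; nra.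
Qed.

Lemma N3 : 1 <= exp (/ K) * (1 - x) ^ d.
Proof.
have := M1 => m1.
have := pow_1x_ge d.
have -> : INR d / M = / K by rewrite /M -/D; field; have := K1; have := D1; lra.
move=> h.
have e0 : 0 < exp (/ K) by apply: exp_pos.
have : exp (/ K) * / exp (/ K) <= exp (/ K) * (1 - x) ^ d by apply: Rmult_le_compat_l; lra.
rewrite Rinv_r; lra.
Qed.

Lemma N4 : 0 <= 1 - / 2 * exp (/ K).
Proof.
have hk : 2 <= K.
  have := le_INR 2 k (elimT leP k2); rewrite /K /=; lra.
have h1 : / K <= / 2 by apply: Rinv_le_contravar; lra.
have h2 := exp_le_mono h1.
have h3 : exp (/ 2) * exp (/ 2) = exp 1 by rewrite -exp_plus; congr exp; field.
have := exp_le_3; have := exp_pos (/ 2); nra.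
Qed.

End Num.

End NumM.
Import NumM.

Lemma INR_expn2 n : INR (expn 2 n) = (2 ^ n)%R.
Proof.
elim: n => [|n IH]; first by rewrite expn0 /=.
rewrite expnS INR_muln IH /=; lra.
Qed.

Section Final.
Variables (V : finType) (k d s : nat) (Phi : {set clause V}) (cstar c' : clause V).
Hypothesis hk : kds_CNF k d s Phi.
Hypothesis c'Phi : c' \in Phi.
Hypothesis vc' : vbl c' = vbl cstar.
Hypothesis hsz : #|vbl cstar| = k.

Definition sig : assignment V := [ffun v => odflt false (cstar v)].
Definition pin (P : {set V}) : {set assignment V} := [set z : assignment V | [forall v in P, z v == sig v]].

Lemma card_meet (l : seq V) :
  #|[set c in Phi | has (fun v => v \in vbl c) l]| <= size l * d.
Proof.
have [_ [hd _]] := hk.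
elim: l => [|v l IH].
  by rewrite leqn0 cards_eq0; apply/eqP/setP => c; rewrite !inE andbF.
apply: (@leq_trans #|[set c in Phi | v \in vbl c] :|: [set c in Phi | has (fun v => v \in vbl c) l]|).
  apply: subset_leq_card; apply/subsetP => c; rewrite !inE /=.
  by case/andP => -> /orP [| ->]; [rewrite inE => -> | rewrite orbT].
apply: leq_trans (leq_card_setU _ _).1 _.
rewrite /= mulSn; apply: leq_add => //; exact: hd.
Qed.

Lemma H2 c : c \in Phi -> #|[set c0 in Phi | ~~ [disjoint vbl c & vbl c0]]| <= k * d.
Proof.
have [hv _] := hk.
move=> cP; rewrite -(hv c cP).
have := card_meet (enum (vbl c)); rewrite -cardE => h; apply: leq_trans h.
apply: subset_leq_card; apply/subsetP => c0; rewrite !inE => /andP [-> nd] /=.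
case: (boolP (has _ _)) => // hn; exfalso; move/negP: nd; apply.
apply/disjP => v va vb; move/hasPn: hn => /(_ v); rewrite mem_enum va => /(_ isT).
by rewrite vb.
Qed.


Variable v1 : V.
Hypothesis v1S : v1 \in vbl cstar.
Hypothesis hv1 : c' v1 != Some (sig v1).

Lemma H1P (P : {set V}) : P \subset vbl cstar -> (v1 \in P) || (P == set0) ->
  forall c (G : {set assignment V}), c \in Phi -> invS (vbl c) G ->
  (INR #|[set z in G :&: pin P | agrees_forbidden c z]| <= / 2 ^ (k - s) * INR #|G :&: pin P|)%R.
Proof.
move=> PS hP c G cP iG.
have [hv [_ hs]] := hk.
have t0 : (0 < 2 ^ (k - s))%R by apply: pow_lt; lra.
case: (boolP [exists u in P, (c u != None) && (c u != Some (sig u))]).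
  case/exists_inP => u uP /andP [cu1 cu2].
  have -> : [set z in G :&: pin P | agrees_forbidden c z] = set0.
    apply/setP => z; rewrite !inE; apply/negP => /andP [/andP [_ /forall_inP zp] /forallP za].
    have := za u; have := zp u uP; move: cu1 cu2; case: (c u) => [b|] //= _ cu2.
    by move=> /eqP -> /eqP e; move: cu2; rewrite e eqxx.
  rewrite cards0 /=; apply: Rmult_le_pos; last exact: pos_INR.
  by left; apply: Rinv_0_lt_compat.
move/exists_inPn => hn.
have hn' : forall u, u \in P -> c u != None -> c u = Some (sig u).
  move=> u uP cu; have := hn u uP; rewrite cu /= negbK => /eqP //.
pose W := vbl c :\: P.
pose tau : assignment V := [ffun v => odflt false (c v)].
have iH : invS W (G :&: pin P).
  move=> z z' ag; rewrite !inE (iG z z').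
    congr andb; apply/forall_inP/forall_inP => h v vP.
      by rewrite -(ag v) ?h // inE vP.
    by rewrite (ag v) ?h // inE vP.
  by move=> v vc; apply: ag; rewrite inE (negbTE vc) andbF.
have co := count_overwrite tau iH.
have sub : #|[set z in G :&: pin P | agrees_forbidden c z]| <=
           #|[set z in G :&: pin P | [forall w in W, z w == tau w]]|.
  apply: subset_leq_card; apply/subsetP => z; rewrite inE => /andP [zH /forallP za].
  rewrite inE zH /=; apply/forall_inP => w; rewrite inE => /andP [_ wc].
  move: wc; rewrite inE /tau ffunE; have := za w; case: (c w) => //.
have cI : #|vbl c :&: P| <= s.
  case: (c =P c') => [ec | ne].
    have P0 : P = set0.
      move: hP; case: (boolP (v1 \in P)) => [v1P _ | _ /eqP //].
      exfalso; move/negP: hv1; apply; apply/eqP; rewrite -ec; apply: hn' => //.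
      have : v1 \in vbl c by rewrite ec vc'.
      by rewrite inE.
    by rewrite P0 setI0 cards0.
  apply: leq_trans (hs c c' cP c'Phi (introN eqP ne)).
  by apply: subset_leq_card; apply: setIS; rewrite vc'.
have cW : k - s <= #|W|.
  rewrite /W cardsD (hv c cP); exact: leq_sub2l.
move/INR_leq: co; rewrite INR_muln INR_expn2 => co.
move/INR_leq: sub => sub.
have pw : (2 ^ (k - s) <= 2 ^ #|W|)%R by apply: Rle_pow; [lra | apply/leP].
move: co sub; set A := INR #|[set z in G :&: pin P | agrees_forbidden c z]|.
set A2 := INR _; set Hc := INR _ => co sub.
have A20 : (0 <= A2)%R by apply: pos_INR.
have : (A * 2 ^ (k - s) <= Hc)%R.
  have : (A * 2 ^ (k - s) <= A2 * 2 ^ #|W|)%R.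
    apply: Rmult_le_compat => //; [exact: pos_INR | lra].
  lra.
move=> h.
have -> : A = ((A * 2 ^ (k - s)) * / 2 ^ (k - s))%R by field; lra.
rewrite Rmult_comm; apply: Rmult_le_compat_l; last exact: h.
by left; apply: Rinv_0_lt_compat.
Qed.

Lemma pinU1 (w : V) (P : {set V}) (z : assignment V) : (z \in pin (w |: P)) = (z w == sig w) && (z \in pin P).
Proof.
rewrite !inE; apply/forall_inP/andP => [h | [h1 /forall_inP h2] v].
  split; first by apply: h; rewrite setU11.
  by apply/forall_inP => v vP; apply: h; rewrite setU1r.
by case/setU1P => [-> | /h2].
Qed.

Hypothesis k1 : 0 < k.
Hypothesis d1 : 0 < d.
Hypothesis hyp : (INR k >= log2 (INR d) + log2 (INR k) + log2 (2 * exp 1) + INR s)%R.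

Lemma step (P : {set V}) (w : V) : P \subset vbl cstar -> (v1 \in P) || (P == set0) ->
  w \notin P ->
  ((1 - / 2 * exp (/ INR k)) * INR #|NN (pin P) Phi| <= INR #|NN (pin (w |: P)) Phi|)%R.
Proof.
move=> PS hP wP.
have [_ [hd _]] := hk.
have iF : invS [set w] (pin P).
  move=> z z' ag; rewrite !inE; apply/forall_inP/forall_inP => h v vP.
    rewrite -(ag v) ?h //; rewrite inE; apply/eqP => e; move: wP; by rewrite -e vP.
  rewrite (ag v) ?h //; rewrite inE; apply/eqP => e; move: wP; by rewrite -e vP.
have eb := event_bound (H1P PS hP) H2 (x01 k1 d1) (N1 k1 d1 hyp) (~~ sig w) iF (hd w).
have sp : #|NN (pin P) Phi| = #|NN (pin (w |: P)) Phi| + #|[set z in NN (pin P) Phi | z w == ~~ sig w]|.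
  rewrite -(cardsID [set z : assignment V | z w == sig w] (NN (pin P) Phi)); congr (_ + _).
    apply: eq_card => z; have := pinU1 w P z; rewrite !inE => ->.
    by case: (z w == sig w); case: [forall v in P, z v == sig v]; case: (sat_formula Phi z).
  apply: eq_card => z; rewrite !inE.
  by case: (z w); case: (sig w); rewrite ?andbF ?andbT.
move/(congr1 INR): sp; rewrite INR_addn => sp.
have n3 := N3 k1 d1.
move: eb sp n3; set x := (/ (INR k * INR d + 1))%R; set N := INR #|NN (pin P) Phi|.
set E := INR #|[set z in NN (pin P) Phi | z w == ~~ sig w]|.
set N' := INR #|NN (pin (w |: P)) Phi| => eb sp n3.
have E0 : (0 <= E)%R by apply: pos_INR.
have ep : (0 < exp (/ INR k))%R by apply: exp_pos.
have : (E <= exp (/ INR k) * (1 - x) ^ d * E)%R.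
  have := Rmult_le_compat_r _ _ _ E0 n3; lra.
have : (exp (/ INR k) * ((1 - x) ^ d * E) <= exp (/ INR k) * (/ 2 * N))%R.
  by apply: Rmult_le_compat_l; lra.
nra.
Qed.

Lemma chain (l : seq V) : uniq l -> {subset l <= vbl cstar} -> v1 \notin l ->
  ((1 - / 2 * exp (/ INR k)) ^ (size l).+1 * INR #|NN (pin set0) Phi|
    <= INR #|NN (pin (v1 |: [set v in l])) Phi|)%R.
Proof.
have q0 := N4 k1 d1 hyp.
elim: l => [|w l IH] /=.
  move=> _ _ _; have -> : v1 |: [set v in [::]] = v1 |: set0.
    by apply/setP => v; rewrite !inE.
  have := step (sub0set _) (introT orP (or_intror (eqxx set0))) (negbT (in_set0 v1)); rewrite Rmult_1_r //.
case/andP => wl ul sub; rewrite inE negb_or => /andP [nv1w nv1l].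
have IH' := IH ul (fun v vl => sub v (@mem_behead _ (w :: l) v vl)) nv1l.
have PS : v1 |: [set v in l] \subset vbl cstar.
  apply/subsetP => v /setU1P [-> // | ]; rewrite inE => vl.
  by apply: sub; rewrite inE vl orbT.
have wP : w \notin v1 |: [set v in l].
  by rewrite !inE negb_or wl andbT eq_sym.
have := @step _ w PS (introT orP (or_introl (setU11 v1 [set v in l]))) wP.
have -> : w |: (v1 |: [set v in l]) = v1 |: [set v in w :: l].
  by apply/setP => v; rewrite !inE; case: (v == w); case: (v == v1); rewrite ?orbT.
move=> h; apply: Rle_trans h.
change (((1 - / 2 * exp (/ INR k)) ^ (size l).+2)%R) with
  ((1 - / 2 * exp (/ INR k)) * (1 - / 2 * exp (/ INR k)) ^ (size l).+1)%R.
rewrite Rmult_assoc; apply: Rmult_le_compat_l => //.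
Qed.


Lemma sat_pos : (0 < INR #|NN (pin set0) Phi|)%R.
Proof.
have h0 : (v1 \in set0) || (set0 == set0 :> {set V}) by rewrite eqxx orbT.
have hm := mainLLL (H1P (sub0set _) h0) H2 (x01 k1 d1) (N1 k1 d1 hyp).
have cle : #|set0 :|: Phi| <= #|Phi| by rewrite set0U.
have dis : [disjoint set0 & Phi] by apply/disjP => z; rewrite inE.
have hp := peel (x01 k1 d1) (@hm #|Phi|) (erefl #|Phi|) (subxx Phi) (sub0set Phi) cle dis.
rewrite set0U in hp.
have n1 : 0 < #|NN (pin set0) set0|.
  apply/card_gt0P; exists [ffun => false]; rewrite !inE.
  by apply/andP; split; apply/forall_inP => v; rewrite inE.
have := INR_leq n1 => /= n1'.
have x0 := x01 k1 d1.
have : (0 < (1 - / (INR k * INR d + 1)) ^ #|Phi|)%R by apply: pow_lt; lra.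
move: hp n1'; set a := INR #|NN (pin set0) set0|; set b := INR #|NN (pin set0) Phi| => hp n1' hq.
have : (0 < (1 - / (INR k * INR d + 1)) ^ #|Phi| * a)%R by apply: Rmult_lt_0_compat; lra.
lra.
Qed.

Lemma final : ((1 - / 2 * exp (/ INR k)) ^ k <= muPr Phi (agrees_forbidden cstar))%R.
Proof.
set S := vbl cstar.
have := @chain (enum (S :\ v1)) (enum_uniq _) _ _.
have e1 : v1 |: [set v in enum (S :\ v1)] = S by rewrite set_enum setD1K.
have e2 : (size (enum (S :\ v1))).+1 = k.
  by rewrite -cardE -hsz (cardsD1 v1 S) v1S.
rewrite e1 e2 => h.
have s1 : {subset enum (S :\ v1) <= S} by move=> v; rewrite mem_enum => /setD1P [].
have s2 : v1 \notin enum (S :\ v1) by rewrite mem_enum !inE eqxx.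
have {}h := h s1 s2.
have ea : #|[set x | sat_formula Phi x && agrees_forbidden cstar x]| = #|NN (pin S) Phi|.
  apply: eq_card => z; rewrite !inE andbC; congr andb.
  apply/forallP/forall_inP => hz v.
    rewrite inE /sig ffunE => cv; have := hz v; move: cv; case: (cstar v) => //.
  have := hz v; rewrite /S inE /sig ffunE; case: (cstar v) => //= b.
  by apply.
have eb : #|[set x | sat_formula Phi x]| = #|NN (pin set0) Phi|.
  apply: eq_card => z; rewrite !inE; apply/idP/andP => [hz | [] //]; split => //.
  by apply/forallP => v; rewrite ?inE.
rewrite /muPr ea eb.
have := sat_pos; move: h; set a := INR #|NN (pin S) Phi|; set b := INR #|NN (pin set0) Phi| => h bp.
apply: (Rmult_le_reg_r b) => //.
have -> : (a / b * b = a)%R by field; lra.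
exact: h.
Qed.

End Final.

Theorem lemma3p5 (V : finType) (k d s : nat) (Phi : {set clause V}) (cstar : clause V) :
  kds_CNF k d s Phi ->
  (INR k >= log2 (INR d) + log2 (INR k) + log2 (2 * exp 1) + INR s)%R ->
  cstar \notin Phi ->
  #|vbl cstar| = k ->
  (exists c', c' \in Phi /\ vbl c' = vbl cstar /\ c' <> cstar) ->
  ((1 - / 2 * exp (/ INR k)) ^ k <= muPr Phi (agrees_forbidden cstar))%R.
Proof.
Import ssrnat.
move=> hk hlog _ hsz [c' [c'P [vc' ne]]].
have [v1 hv1] : exists v, c' v != cstar v.
  case: (boolP [exists v, c' v != cstar v]) => [/existsP // | /existsPn h].
  exfalso; apply: ne; apply/ffunP => v; apply/eqP; move: (h v); by rewrite negbK.
have v1S : v1 \in vbl cstar.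
  rewrite inE; apply/negP => /eqP e.
  have : v1 \notin vbl c' by rewrite vc' inE e eqxx.
  rewrite inE negbK => /eqP e'.
  by move: hv1; rewrite e e' eqxx.
have hv1' : c' v1 != Some (sig cstar v1).
  move: v1S hv1; rewrite inE /sig ffunE; case: (cstar v1) => //.
have k1 : 0 < k by rewrite -hsz card_gt0; apply/set0Pn; exists v1.
have d1 : 0 < d.
  have [_ [hd _]] := hk.
  apply: leq_trans (hd v1); rewrite card_gt0; apply/set0Pn; exists c'.
  by rewrite inE c'P vc' v1S.
exact: (final hk c'P vc' hsz v1S hv1' k1 d1 hlog).
Qed.
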